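(* Let $k\geq 1$. Every graph $G$ with $n$ vertices and no $(k+1)$-clique satisfies $c(G)\leq\left(\frac{n}{k}+1\right)^k$.
   Context: All graphs are finite, simple and undirected. A clique of a graph $G$ is a (possibly empty) set of pairwise adjacent vertices, a $k$-clique is a clique of cardinality $k$, and $c(G)$ denotes the number of cliques of $G$ (including the empty clique). *)

(* Defs.v *)
From mathcomp Require Import all_boot all_order all_algebra.
Set Implicit Arguments. Unset Strict Implicit. Unset Printing Implicit Defensive.

(* A finite simple graph: vertex type T : finType, adjacency e : rel T,
   assumed symmetric and irreflexive (hypotheses in the theorem). *)

Definition is_clique (T : finType) (e : rel T) (A : {set T}) : bool :=
  [forall x in A, forall y in A, (x != y) ==> e x y].

(* c(G): the number of cliques, including the empty clique. *)
Definition num_cliques (T : finType) (e : rel T) : nat :=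
  #|[set A : {set T} | is_clique e A]|.

(* Main.v *)
Require Import Defs.
From mathcomp Require Import all_boot all_order all_algebra.
From mathcomp Require Import ring lra.
Import Order.TTheory GRing.Theory Num.Theory.
Set Implicit Arguments. Unset Strict Implicit.
Section Comb.
Variables (T : finType) (e : rel T).

Definition cl (U : {set T}) := #|[set S : {set T} | (S \subset U) && is_clique e S]|.
Definition nb (b : T) : {set T} := [set y | e b y].

Lemma cliqueP (A : {set T}) :
  reflect (forall x y, x \in A -> y \in A -> x != y -> e x y) (is_clique e A).
Proof.
apply: (iffP forall_inP) => [H x y xA yA xy | H x xA].
  by move/forall_inP: (H x xA) => /(_ y yA) /implyP; apply.
by apply/forall_inP => y yA; apply/implyP; apply: H.
Qed.

Lemma clique_sub (A B : {set T}) : is_clique e A -> B \subset A -> is_clique e B.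
Proof.
move=> /cliqueP H /subsetP sBA; apply/cliqueP => x y xB yB; apply: H; exact: sBA.
Qed.

Lemma clique_add (v : T) (S : {set T}) : symmetric e -> is_clique e S ->
  (forall y, y \in S -> e v y) -> is_clique e (v |: S).
Proof.
move=> sym /cliqueP H Hv; apply/cliqueP => x y /setU1P[->|xS] /setU1P[->|yS].
- by rewrite eqxx.
- by move=> _; apply: Hv.
- by move=> _; rewrite sym; apply: Hv.
- exact: H.
Qed.

Lemma card_bigcup_le (I V : finType) (P : {set I}) (F : I -> {set V}) :
  (#|\bigcup_(i in P) F i| <= \sum_(i in P) #|F i|)%N.
Proof.
apply: (big_ind2 (fun (x : {set V}) y => #|x| <= y)%N).
- by rewrite cards0.
- move=> x1 x2 y1 y2 h1 h2; apply: leq_trans (leq_card_setU _ _) _.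
  exact: leq_add.
- by [].
Qed.

Lemma cl_split (U A B : {set T}) : A \subset U -> B = U :\: A ->
  (cl U <= cl A + \sum_(b in B) cl (U :&: nb b))%N.
Proof.
move=> sAU ->.
pose Sb b := [set S : {set T} | [&& S \subset U, is_clique e S & b \in S]].
have H1 : [set S : {set T} | (S \subset U) && is_clique e S] \subset
   [set S : {set T} | (S \subset A) && is_clique e S] :|: \bigcup_(b in U :\: A) Sb b.
  apply/subsetP => S; rewrite !inE => /andP[sSU cS].
  case sSA: (S \subset A); first by rewrite cS.
  apply/bigcupP; move/negbT: sSA => /subsetPn [b bS bA].
  exists b; first by rewrite !inE bA (subsetP sSU).
  by rewrite inE sSU cS bS.
rewrite /cl; apply: leq_trans (subset_leq_card H1) _.
apply: leq_trans (leq_card_setU _ _) _; rewrite leq_add2l.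
apply: leq_trans (card_bigcup_le _ _) _; apply: leq_sum => b _.
have H2 : Sb b \subset (fun S => b |: S) @: [set S : {set T} | (S \subset U :&: nb b) && is_clique e S].
  apply/subsetP => S; rewrite inE => /and3P[sSU cS bS].
  apply/imsetP; exists (S :\ b); last by rewrite setD1K.
  rewrite inE; apply/andP; split; last by apply: clique_sub cS (subD1set _ _).
  apply/subsetP => x; rewrite !inE => /andP[xb xS].
  rewrite (subsetP sSU) //=; move/cliqueP: cS => cS; apply: cS => //.
  by rewrite eq_sym.
exact: leq_trans (subset_leq_card H2) (leq_imset_card _ _).
Qed.


Lemma cl_le1 (U : {set T}) : (forall S : {set T}, S \subset U -> is_clique e S -> S = set0) -> (cl U <= 1)%N.
Proof.
move=> H; rewrite /cl -(cards1 (@set0 T)); apply: subset_leq_card.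
by apply/subsetP => S; rewrite !inE => /andP[sSU cS]; rewrite (H S sSU cS).
Qed.

Lemma nb_hyp (sym : symmetric e) (irr : irreflexive e) (k : nat) (U : {set T}) b :
  b \in U ->
  (forall S : {set T}, S \subset U -> is_clique e S -> #|S| <= k.+1)%N ->
  (forall S : {set T}, S \subset U :&: nb b -> is_clique e S -> #|S| <= k)%N.
Proof.
move=> bU HU S sS cS.
have bS : b \notin S.
  by apply/negP => /(subsetP sS); rewrite !inE irr andbF.
have := HU (b |: S); rewrite cardsU1 bS add1n ltnS; apply.
  apply/subsetP => x /setU1P[->//|xS]; by have := subsetP sS x xS; rewrite inE => /andP[].
apply: clique_add => // y yS; by have := subsetP sS y yS; rewrite !inE => /andP[].
Qed.

End Comb.
Local Open Scope ring_scope.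



Lemma bern (y d : rat) (n : nat) : 0 <= y -> 0 <= y + d ->
  y ^+ n * (y + n.+1%:R * d) <= (y + d) ^+ n.+1.
Proof.
move=> y0 yd0; elim: n => [|n IH]; first by rewrite expr0 mul1r expr1 mul1r.
have pn : 0 <= y ^+ n by apply: exprn_ge0.
rewrite exprS [X in _ <= X]exprS.
have H1 : (y + d) * (y ^+ n * (y + n.+1%:R * d)) <= (y + d) * (y + d) ^+ n.+1.
  by apply: ler_wpM2l.
apply: le_trans H1.
rewrite -!natr1 /=.
set N := n%:R.
have N0 : 0 <= N by rewrite /N ler0n.
rewrite -subr_ge0.
have -> : (y + d) * (y ^+ n * (y + (N + 1) * d)) - y * y ^+ n * (y + (N + 1 + 1) * d)
   = y ^+ n * (N + 1) * (d * d) by ring.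
apply: mulr_ge0; last by rewrite -expr2 sqr_ge0. apply: mulr_ge0 => //; lra.
Qed.

Lemma amgm (x y : rat) (k : nat) : 0 <= x -> 0 <= y ->
  x * y ^+ k <= ((x + k%:R * y) / k.+1%:R) ^+ k.+1.
Proof.
move=> x0 y0.
have k1 : 0 < k.+1%:R :> rat by rewrite ltr0n.
set d := (x - y) / k.+1%:R.
have ex : x = y + k.+1%:R * d by rewrite /d mulrC divfK ?lt0r_neq0 //; ring.
have es : (x + k%:R * y) / k.+1%:R = y + d.
  by rewrite /d -natr1; field; rewrite -natr1 in k1; lra.
rewrite es {1}ex mulrC; apply: bern => //.
have : 0 <= y + k.+1%:R * d by rewrite -ex.
have kk : 0 <= k%:R :> rat by rewrite ler0n.
rewrite -natr1; nra.
Qed.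

Lemma final_ineq (k n m : nat) : (m <= n)%N ->
  ((1 + (n - m))%:R) * (m%:R / k%:R + 1) ^+ k <= (n%:R / k.+1%:R + 1) ^+ k.+1 :> rat.
Proof.
move=> mn.
have n0 : 0 <= n%:R :> rat by rewrite ler0n.
have m0 : 0 <= m%:R :> rat by rewrite ler0n.
case: k => [|k].
  rewrite expr0 mulr1 expr1 divr1 natrD natrB //; lra.
have := @amgm (1 + (n - m))%:R (m%:R / k.+1%:R + 1) k.+1 (ler0n _ _).
move=> /(_ _)/le_trans; apply; first by rewrite addr_ge0 ?divr_ge0 ?ler0n.
have -> : ((1 + (n - m))%:R + k.+1%:R * (m%:R / k.+1%:R + 1)) / k.+2%:R
   = n%:R / k.+2%:R + 1 :> rat.
  rewrite natrD natrB // -[k.+2]addn1 -[k.+1]addn1 !natrD.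
  have k0 : 0 <= k%:R :> rat by rewrite ler0n.
  field; lra.
by [].
Qed.

Lemma main (T : finType) (e : rel T) (sym : symmetric e) (irr : irreflexive e) (k : nat) :
  forall U : {set T}, (forall S : {set T}, S \subset U -> is_clique e S -> #|S| <= k)%N ->
  (cl e U)%:R <= (#|U|%:R / k%:R + 1) ^+ k :> rat.
Proof.
elim: k => [|k IH] U HU.
  rewrite expr0 -[1]/(1%:R) ler_nat; apply: cl_le1 => S sS cS.
  by apply: cards0_eq; apply/eqP; rewrite -leqn0; apply: HU.
case: (set_0Vmem U) => [U0|[v0 v0U]].
  rewrite U0 cards0 mul0r add0r expr1n -[1]/(1%:R) ler_nat; apply: cl_le1 => S.
  by rewrite subset0 => /eqP ->.
case: (@arg_maxnP _ v0 (mem U) (fun v => #|U :&: nb e v|) v0U) => v vU vmax.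
set A := U :&: nb e v.
have sAU : A \subset U by apply: subsetIl.
have Hsplit := cl_split e (B := U :\: A) sAU erefl.
set y := (#|A|%:R / k%:R + 1) ^+ k : rat.
have Hb : forall b, b \in U -> (cl e (U :&: nb e b))%:R <= y.
  move=> b bU; apply: le_trans (IH _ (nb_hyp sym irr bU HU)) _.
  apply: lerXn2r; rewrite ?nnegrE ?addr_ge0 ?divr_ge0 ?ler0n //.
  rewrite lerD2r; apply: ler_wpM2r; rewrite ?invr_ge0 ?ler0n // ler_nat.
  exact: vmax.
apply: le_trans (final_ineq k (subset_leq_card sAU)).
have h1 : (cl e U)%:R <= (cl e A)%:R + \sum_(b in U :\: A) (cl e (U :&: nb e b))%:R :> rat.
  by rewrite -natr_sum -natrD ler_nat.
apply: le_trans h1 _.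
have hA : (cl e A)%:R <= y by exact: Hb v vU.
have hS : \sum_(b in U :\: A) (cl e (U :&: nb e b))%:R <= \sum_(b in U :\: A) y.
  apply: ler_sum => b; rewrite inE => /andP[_ bU]; exact: Hb.
rewrite sumr_const cardsD (setIidPr sAU) in hS.
rewrite natrD mulrDl mul1r [X in _ <= _ + X]mulr_natl.
exact: lerD.
Qed.

Theorem proposition9 (k : nat) (T : finType) (e : rel T) :
  (1 <= k)%N ->
  symmetric e -> irreflexive e ->
  (forall A : {set T}, is_clique e A -> #|A| != k.+1) ->
  ((num_cliques e)%:R <= (#|T|%:R / k%:R + 1) ^+ k :> rat)%R.
Proof.
move=> k1 sym irr H.
have -> : num_cliques e = cl e [set: T].
  by rewrite /num_cliques /cl; apply: eq_card => S; rewrite !inE subsetT.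
rewrite -cardsT; apply: main => // S _ cS.
rewrite leqNgt; apply/negP => /card_geqP [s [us ss sub]].
have cX : is_clique e [set x in s].
  apply: clique_sub cS _; apply/subsetP => x; rewrite inE; exact: sub.
by move: (H _ cX); rewrite cardsE (card_uniqP us) ss eqxx.
Qed.
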